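(* Let $k,D,s^{\mathrm{in}}>0$, let $K_1,\dots,K_5>0$, and let $\mu:[0,\infty)\to[0,\infty)$ satisfy $\mu(0)=0$, $\mu(s)>0$ for $s>0$, $\mu\le\mu_{\max}<\infty$, and be continuous at $0$. For $x=(b,s)^*\in\mathbb{R}_+^2$ define the rates $$\lambda_1(x)=K_1\mu(s)b,\quad \lambda_2(x)=K_2k\mu(s)b,\quad \lambda_3(x)=K_3Ds^{\mathrm{in}},\quad \lambda_4(x)=K_4Db,\quad \lambda_5(x)=K_5Ds,$$ the state-dependent jumps $$\nu_1(x)=\begin{pmatrix}\frac1{K_1}\\0\end{pmatrix},\ \nu_2(x)=-\begin{pmatrix}0\\ \frac{1\wedge K_2 s}{K_2}\end{pmatrix},\ \nu_3(x)=\begin{pmatrix}0\\ \frac1{K_3}\end{pmatrix},\ \nu_4(x)=-\begin{pmatrix}\frac{1\wedge K_4 b}{K_4}\\0\end{pmatrix},\ \nu_5(x)=-\begin{pmatrix}0\\ \frac{1\wedge K_5 s}{K_5}\end{pmatrix},$$ and the constant jumps $$\nu_1=\begin{pmatrix}\frac1{K_1}\\0\end{pmatrix},\ \nu_2=-\begin{pmatrix}0\\ \frac1{K_2}\end{pmatrix},\ \nu_3=\begin{pmatrix}0\\ \frac1{K_3}\end{pmatrix},\ \nu_4=-\begin{pmatrix}\frac1{K_4}\\0\end{pmatrix},\ \nu_5=-\begin{pmatrix}0\\ \frac1{K_5}\end{pmatrix}.$$ Let $\lambda(x)=\sum_{i=1}^5\lambda_i(x)$, $\bar\lambda_i(x)=\lambda_i(x)/\lambda(x)$,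 $f_K(x)=\sum_{i=1}^5\nu_i(x)\lambda_i(x)$, $m_K(x)=\sum_{i=1}^5\nu_i(x)\bar\lambda_i(x)$, $m(x)=\sum_{i=1}^5\nu_i\bar\lambda_i(x)$, and $$f(x)=\begin{pmatrix}\mu(s)b-Db\\ -k\mu(s)b+D(s^{\mathrm{in}}-s)\end{pmatrix}.$$ Then $|\nu_i(x)|\le|\nu_i|$ for all $i$ and $x$. Let $$\mathcal{R}_K=\Big\{x=(b,s)^*\in\mathbb{R}_+^2:\ b\le \tfrac1{K_4}\ \text{or}\ s\le\tfrac1{K_2}\ \text{or}\ s\le\tfrac1{K_5}\Big\}.$$ For $x\notin\mathcal{R}_K$ one has $\nu_i(x)=\nu_i$ for all $i$, $m_K(x)=m(x)$ and $f_K(x)=f(x)$. For all $x=(b,s)^*\in\mathbb{R}_+^2$: $$|\nu_i(x)-\nu_i|\le\frac1{\min_{j=1,\dots,5}K_j}\ (i=1,\dots,5),\qquad |m_K(x)-m(x)|\le\frac1{\min_{j=1,\dots,5}K_j},$$ $$|f_K(x)-f(x)|\le(1-K_2s)^+k\mu(s)b+(1-K_4b)^+Db+(1-K_5s)^+Ds.$$ Consequently $f_K(x)\to f(x)$ as $K_i\to\infty$ for all $i=1,\dots,5$, and this convergence is uniform on every compact subset of $(0,\infty)^2$.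
   Context: Here $|\cdot|$ is the Euclidean norm on $\mathbb{R}^2$, $a\wedge c=\min(a,c)$ and $a^+=\max(a,0)$. Note $\lambda(x)\ge K_3Ds^{\mathrm{in}}>0$, so $\bar\lambda_i$ is well defined. These objects describe a stochastic chemostat model with biomass concentration $b$ and substrate concentration $s$, dilution rate $D$, inflow substrate concentration $s^{\mathrm{in}}$, stoichiometric coefficient $k$, specific growth rate $\mu$, and scale parameters $K_i$. *)

(* Defs.v *)
From HB Require Import structures.
From mathcomp Require Import all_boot all_order all_algebra.
From mathcomp Require Import all_classical all_reals topology normedtype.
Import numFieldNormedType.Exports.
Set Implicit Arguments. Unset Strict Implicit. Unset Printing Implicit Defensive.
Import Order.TTheory GRing.Theory Num.Theory.
Local Open Scope ring_scope.

(* Points x = (b, s) of R^2 are pairs; x.1 = b (biomass), x.2 = s (substrate).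
   The scale parameters K_1..K_5 are the values K 1%N, ..., K 5%N of K : nat -> R. *)

Definition vnorm {R : realType} (v : R * R) : R := Num.sqrt (v.1 ^+ 2 + v.2 ^+ 2).
Definition vsub {R : realType} (u v : R * R) : R * R := (u.1 - v.1, u.2 - v.2).
Definition pospart {R : realType} (a : R) : R := Num.max a 0.

Definition lam {R : realType} (k D sin : R) (K : nat -> R) (mu : R -> R)
  (i : nat) (x : R * R) : R :=
  let b := x.1 in let s := x.2 in
  match i with
  | 1 => K 1%N * mu s * b
  | 2 => K 2%N * k * mu s * b
  | 3 => K 3%N * D * sin
  | 4 => K 4%N * D * b
  | 5 => K 5%N * D * s
  | _ => 0
  end.

Definition lamT {R : realType} (k D sin : R) (K : nat -> R) (mu : R -> R)
  (x : R * R) : R := \sum_(1 <= i < 6) lam k D sin K mu i x.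

Definition lbar {R : realType} (k D sin : R) (K : nat -> R) (mu : R -> R)
  (i : nat) (x : R * R) : R := lam k D sin K mu i x / lamT k D sin K mu x.

Definition nuK {R : realType} (K : nat -> R) (i : nat) (x : R * R) : R * R :=
  let b := x.1 in let s := x.2 in
  match i with
  | 1 => ((K 1%N)^-1, 0)
  | 2 => (0, - (Num.min 1 (K 2%N * s) / K 2%N))
  | 3 => (0, (K 3%N)^-1)
  | 4 => (- (Num.min 1 (K 4%N * b) / K 4%N), 0)
  | 5 => (0, - (Num.min 1 (K 5%N * s) / K 5%N))
  | _ => (0, 0)
  end.

Definition nu {R : realType} (K : nat -> R) (i : nat) : R * R :=
  match i with
  | 1 => ((K 1%N)^-1, 0)
  | 2 => (0, - (K 2%N)^-1)
  | 3 => (0, (K 3%N)^-1)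
  | 4 => (- (K 4%N)^-1, 0)
  | 5 => (0, - (K 5%N)^-1)
  | _ => (0, 0)
  end.

Definition fK {R : realType} (k D sin : R) (K : nat -> R) (mu : R -> R)
  (x : R * R) : R * R :=
  (\sum_(1 <= i < 6) (nuK K i x).1 * lam k D sin K mu i x,
   \sum_(1 <= i < 6) (nuK K i x).2 * lam k D sin K mu i x).

Definition mK {R : realType} (k D sin : R) (K : nat -> R) (mu : R -> R)
  (x : R * R) : R * R :=
  (\sum_(1 <= i < 6) (nuK K i x).1 * lbar k D sin K mu i x,
   \sum_(1 <= i < 6) (nuK K i x).2 * lbar k D sin K mu i x).

Definition mC {R : realType} (k D sin : R) (K : nat -> R) (mu : R -> R)
  (x : R * R) : R * R :=
  (\sum_(1 <= i < 6) (nu K i).1 * lbar k D sin K mu i x,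
   \sum_(1 <= i < 6) (nu K i).2 * lbar k D sin K mu i x).

Definition fchem {R : realType} (k D sin : R) (mu : R -> R) (x : R * R) : R * R :=
  let b := x.1 in let s := x.2 in
  (mu s * b - D * b, - k * mu s * b + D * (sin - s)).

Definition Kmin {R : realType} (K : nat -> R) : R :=
  Num.min (K 1%N) (Num.min (K 2%N) (Num.min (K 3%N) (Num.min (K 4%N) (K 5%N)))).

Definition RK {R : realType} (K : nat -> R) (x : R * R) : Prop :=
  0 <= x.1 /\ 0 <= x.2 /\
  (x.1 <= (K 4%N)^-1 \/ x.2 <= (K 2%N)^-1 \/ x.2 <= (K 5%N)^-1).

Definition Rplus2 {R : realType} (x : R * R) : Prop := 0 <= x.1 /\ 0 <= x.2.

(* Main.v *)
Require Import Defs.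
From HB Require Import structures.
From mathcomp Require Import all_boot all_order all_algebra.
From mathcomp Require Import all_classical all_reals topology normedtype.
From mathcomp Require Import ring lra.
Import numFieldNormedType.Exports.
Import Order.TTheory GRing.Theory Num.Theory.
Local Open Scope ring_scope.
Local Open Scope classical_set_scope.

Lemma comp_lb1 (R : realType) (A : set (R * R)) (p : R * R -> R) :
  continuous p -> compact A -> (forall x, A x -> 0 < p x) ->
  exists d : R, 0 < d /\ forall x, A x -> d <= p x.
Proof.
move=> pc cA Ap.
have cont : {within A, continuous (fun x => (p x)^-1)}.
  apply: continuous_in_subspaceT => x /set_mem Ax.
  apply: continuous_comp; first exact: pc.
  apply: inv_continuous; by rewrite gt_eqF // Ap.
have /compact_bounded [M0 [_ HM]] := continuous_compact cont cA.
exists (Num.max (M0 + 1) 1)^-1; split.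
  by rewrite invr_gt0 lt_max ltr01 orbT.
move=> x Ax.
have := HM (Num.max (M0 + 1) 1) _ (p x)^-1 (ex_intro2 _ _ x Ax erefl).
have px := Ap x Ax.
rewrite lt_max ltrDl ltr01 => /(_ isT).
move=> /= h; move: h; rewrite ger0_norm ?invr_ge0 ?(ltW px) // => h.
rewrite -[leRHS]invrK lef_pV2 ?posrE ?invr_gt0 ?lt_max ?ltr01 ?orbT //.
Qed.

Section S.
Variable R : realType.

Lemma sum5 (F : nat -> R) : \sum_(1 <= i < 6) F i = F 1%N + F 2%N + F 3%N + F 4%N + F 5%N.
Proof. do 4 rewrite big_nat_recr //=. by rewrite big_nat1. Qed.

Lemma vnorm_le (a c : R) : vnorm (a, c) <= `|a| + `|c|.
Proof.
rewrite /vnorm /= -(ger0_norm (addr_ge0 (normr_ge0 a) (normr_ge0 c))) -sqrtr_sqr.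
apply: ler_wsqrtr; rewrite sqrrD -[a ^+ 2]real_normK ?num_real // -[c ^+ 2]real_normK ?num_real //.
have := mulr_ge0 (normr_ge0 a) (normr_ge0 c); lra.
Qed.

Lemma vnorm0l (c : R) : vnorm (0, c) = `|c|.
Proof. by rewrite /vnorm /= expr0n /= add0r sqrtr_sqr. Qed.
Lemma vnorm0r (a : R) : vnorm (a, 0) = `|a|.
Proof. by rewrite /vnorm /= expr0n /= addr0 sqrtr_sqr. Qed.

Lemma minf (K y : R) : 0 < K -> 0 <= y ->
  0 <= Num.min 1 (K * y) <= 1 /\ 1 - Num.min 1 (K * y) = pospart (1 - K * y).
Proof.
move=> hK hy; rewrite /pospart.
have hKy : 0 <= K * y by rewrite mulr_ge0 // ltW.
have [h|h] := leP 1 (K * y).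
  rewrite max_r ?subr_le0 //; split; [lra|lra].
rewrite max_l ?subr_ge0 ?(ltW h) //; split; lra.
Qed.

Arguments minf {K y}.
Lemma divle (K m : R) : 0 < K -> 0 <= m <= 1 -> 0 <= m / K <= K^-1.
Proof.
move=> hK /andP[m0 m1]; rewrite divr_ge0 ?(ltW hK) //=.
by rewrite -[leRHS]mul1r ler_wpM2r // invr_ge0 ltW.
Qed.
Arguments divle {K m}.

Lemma part1 (K : nat -> R) (i : nat) (x : R * R) :
  (forall i : nat, (1 <= i <= 5)%N -> 0 < K i) ->
  (1 <= i <= 5)%N -> Rplus2 x -> vnorm (nuK K i x) <= vnorm (nu K i).
Proof.
move=> hK hi [b0 s0].
case: i hi => [|[|[|[|[|[|i]]]]]] // _ /=; rewrite ?vnorm0l ?vnorm0r ?normrN //.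
- have [h _] := minf (hK 2%N isT) s0.
  have /andP[h1 h2] := divle (hK 2%N isT) h.
  by rewrite !ger0_norm ?invr_ge0 ?(ltW (hK 2%N isT)).
- have [h _] := minf (hK 4%N isT) b0.
  have /andP[h1 h2] := divle (hK 4%N isT) h.
  by rewrite !ger0_norm ?invr_ge0 ?(ltW (hK 4%N isT)).
- have [h _] := minf (hK 5%N isT) s0.
  have /andP[h1 h2] := divle (hK 5%N isT) h.
  by rewrite !ger0_norm ?invr_ge0 ?(ltW (hK 5%N isT)).
Qed.
Lemma min1 (K y : R) : 0 < K -> K^-1 < y -> Num.min 1 (K * y) = 1.
Proof.
move=> hK hy; rewrite min_l // ltW //.
have -> : (1 : R) = K * K^-1 by rewrite mulfV // gt_eqF.
by rewrite ltr_pM2l.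
Qed.

Lemma part2 (k D sin : R) (K : nat -> R) (mu : R -> R) (x : R * R) :
  (forall i : nat, (1 <= i <= 5)%N -> 0 < K i) ->
  Rplus2 x -> ~ RK K x ->
     (forall i : nat, (1 <= i <= 5)%N -> nuK K i x = nu K i) /\
     mK k D sin K mu x = mC k D sin K mu x /\
     fK k D sin K mu x = fchem k D sin mu x.
Proof.
move=> hK [b0 s0] nR.
have hb : (K 4%N)^-1 < x.1.
  rewrite ltNge; apply/negP => h; apply: nR; split => //; split => //; by left.
have hs2 : (K 2%N)^-1 < x.2.
  rewrite ltNge; apply/negP => h; apply: nR; split => //; split => //; by right; left.
have hs5 : (K 5%N)^-1 < x.2.
  rewrite ltNge; apply/negP => h; apply: nR; split => //; split => //; by right; right.
have Hall : forall i, nuK K i x = nu K i.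
  case=> [|[|[|[|[|[|i]]]]]] //=.
  - by rewrite min1 ?hK // div1r.
  - by rewrite min1 ?hK // div1r.
  - by rewrite min1 ?hK // div1r.
split; first by move=> i _; exact: Hall.
split; first by rewrite /mK /mC; congr pair; apply: eq_bigr => i _; rewrite Hall.
rewrite /fK /fchem !sum5 !Hall /=.
have k1 : K 1%N != 0 by rewrite gt_eqF ?hK.
have k2 : K 2%N != 0 by rewrite gt_eqF ?hK.
have k3 : K 3%N != 0 by rewrite gt_eqF ?hK.
have k4 : K 4%N != 0 by rewrite gt_eqF ?hK.
have k5 : K 5%N != 0 by rewrite gt_eqF ?hK.
congr pair; field; rewrite ?k1 ?k2 ?k3 ?k4 ?k5 //.
Qed.
Lemma Kmin_pos {K : nat -> R} :
  (forall i : nat, (1 <= i <= 5)%N -> 0 < K i) -> 0 < Kmin K.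
Proof. by move=> hK; rewrite /Kmin !lt_min !hK. Qed.

Lemma Kmin_inv {K : nat -> R} {i} :
  (forall i : nat, (1 <= i <= 5)%N -> 0 < K i) -> (1 <= i <= 5)%N ->
  (K i)^-1 <= (Kmin K)^-1.
Proof.
move=> hK hi; rewrite lef_pV2 ?posrE ?hK ?Kmin_pos //.
case: i hi => [|[|[|[|[|[|i]]]]]] // _; rewrite /Kmin !ge_min lexx ?orbT //.
Qed.

Lemma cbound {K m y : R} : 0 < K -> 0 <= y -> K^-1 <= m ->
  0 <= K^-1 - Num.min 1 (K * y) / K <= m.
Proof.
move=> hK hy hm; have [h _] := minf hK hy.
have /andP[h1 h2] := divle hK h.
apply/andP; split; lra.
Qed.

Lemma part3 (k D sin : R) (K : nat -> R) (mu : R -> R) (x : R * R) :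
  0 < k -> 0 < D -> 0 < sin ->
  (forall i : nat, (1 <= i <= 5)%N -> 0 < K i) ->
  (forall s : R, 0 <= s -> 0 <= mu s) ->
  Rplus2 x ->
     (forall i : nat, (1 <= i <= 5)%N ->
        vnorm (vsub (nuK K i x) (nu K i)) <= (Kmin K)^-1) /\
     vnorm (vsub (mK k D sin K mu x) (mC k D sin K mu x)) <= (Kmin K)^-1 /\
     vnorm (vsub (fK k D sin K mu x) (fchem k D sin mu x)) <=
       pospart (1 - K 2%N * x.2) * k * mu x.2 * x.1
       + pospart (1 - K 4%N * x.1) * D * x.1
       + pospart (1 - K 5%N * x.2) * D * x.2.
Proof.
move=> hk hD hsin hK hmunn [b0 s0].
have mpos := Kmin_pos hK.
have c2 := cbound (hK 2%N isT) s0 (Kmin_inv hK (isT : (1 <= 2 <= 5)%N)).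
have c4 := cbound (hK 4%N isT) b0 (Kmin_inv hK (isT : (1 <= 4 <= 5)%N)).
have c5 := cbound (hK 5%N isT) s0 (Kmin_inv hK (isT : (1 <= 5 <= 5)%N)).
have k1 : K 1%N != 0 by rewrite gt_eqF ?hK.
have k2 : K 2%N != 0 by rewrite gt_eqF ?hK.
have k3 : K 3%N != 0 by rewrite gt_eqF ?hK.
have k4 : K 4%N != 0 by rewrite gt_eqF ?hK.
have k5 : K 5%N != 0 by rewrite gt_eqF ?hK.
split.
  case=> [|[|[|[|[|[|i]]]]]] // _; rewrite /vsub /= ?subrr ?vnorm0l ?vnorm0r ?normr0 ?invr_ge0 ?(ltW mpos) //.
  - by rewrite opprK addrC ger0_norm; case/andP: c2.
  - by rewrite opprK addrC ger0_norm; case/andP: c4.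
  - by rewrite opprK addrC ger0_norm; case/andP: c5.
have mu0 := hmunn _ s0.
have l1 : 0 <= lam k D sin K mu 1 x by rewrite /= !mulr_ge0 ?(ltW (hK 1%N isT)).
have l2 : 0 <= lam k D sin K mu 2 x by rewrite /= !mulr_ge0 ?(ltW (hK 2%N isT)) ?(ltW hk).
have l3 : 0 < lam k D sin K mu 3 x by rewrite /= !mulr_gt0 ?hK.
have l4 : 0 <= lam k D sin K mu 4 x by rewrite /= !mulr_ge0 ?(ltW (hK 4%N isT)) ?(ltW hD).
have l5 : 0 <= lam k D sin K mu 5 x by rewrite /= !mulr_ge0 ?(ltW (hK 5%N isT)) ?(ltW hD).
have hL : lamT k D sin K mu x = lam k D sin K mu 1 x + lam k D sin K mu 2 x +
   lam k D sin K mu 3 x + lam k D sin K mu 4 x + lam k D sin K mu 5 x by rewrite /lamT sum5.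
have Lpos : 0 < lamT k D sin K mu x by rewrite hL; lra.
have lb : forall i, 0 <= lam k D sin K mu i x -> 0 <= lbar k D sin K mu i x.
  by move=> i hi; rewrite /lbar divr_ge0 // ltW.
have b1 := lb _ l1; have b2 := lb _ l2; have b3 := lb _ (ltW l3).
have b4 := lb _ l4; have b5 := lb _ l5.
have bs : lbar k D sin K mu 1 x + lbar k D sin K mu 2 x + lbar k D sin K mu 3 x +
   lbar k D sin K mu 4 x + lbar k D sin K mu 5 x = 1.
  by rewrite /lbar hL; field; rewrite gt_eqF // -hL.
split.
  have e1 : (vsub (mK k D sin K mu x) (mC k D sin K mu x)).1 =
    ((K 4%N)^-1 - Num.min 1 (K 4%N * x.1) / K 4%N) * lbar k D sin K mu 4 x.
    by rewrite /vsub /mK /mC /= !sum5 /=; ring.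
  have e2 : (vsub (mK k D sin K mu x) (mC k D sin K mu x)).2 =
    ((K 2%N)^-1 - Num.min 1 (K 2%N * x.2) / K 2%N) * lbar k D sin K mu 2 x +
    ((K 5%N)^-1 - Num.min 1 (K 5%N * x.2) / K 5%N) * lbar k D sin K mu 5 x.
    by rewrite /vsub /mK /mC /= !sum5 /=; ring.
  rewrite [vsub _ _]surjective_pairing e1 e2; apply: le_trans (vnorm_le _ _) _.
  case/andP: c2 => c20 c2m; case/andP: c4 => c40 c4m; case/andP: c5 => c50 c5m.
  move: c20 c2m c40 c4m c50 c5m bs b1 b2 b3 b4 b5.
  set C2 := _ - _ / K 2%N; set C4 := _ - _ / K 4%N; set C5 := _ - _ / K 5%N.
  set L1 := lbar _ _ _ _ _ 1 x; set L2 := lbar _ _ _ _ _ 2 x; set L3 := lbar _ _ _ _ _ 3 x.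
  set L4 := lbar _ _ _ _ _ 4 x; set L5 := lbar _ _ _ _ _ 5 x.
  clearbody C2 C4 C5 L1 L2 L3 L4 L5.
  move=> c20 c2m c40 c4m c50 c5m bs b1 b2 b3 b4 b5.
  rewrite !ger0_norm ?addr_ge0 ?mulr_ge0 //.
  have := ler_wpM2r b2 c2m; have := ler_wpM2r b4 c4m; have := ler_wpM2r b5 c5m.
  have m0 : 0 <= (Kmin K)^-1 by rewrite invr_ge0 ltW.
  have := mulr_ge0 m0 b1; have := mulr_ge0 m0 b3.
  have : (Kmin K)^-1 = (Kmin K)^-1 * L1 + (Kmin K)^-1 * L2 + (Kmin K)^-1 * L3 + (Kmin K)^-1 * L4 + (Kmin K)^-1 * L5 by rewrite -!mulrDr bs mulr1.
  lra.
have e1 : (vsub (fK k D sin K mu x) (fchem k D sin mu x)).1 =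
    (1 - Num.min 1 (K 4%N * x.1)) * D * x.1.
  by rewrite /vsub /fK /fchem /= !sum5 /=; field; rewrite ?k1 ?k2 ?k3 ?k4 ?k5.
have e2 : (vsub (fK k D sin K mu x) (fchem k D sin mu x)).2 =
    (1 - Num.min 1 (K 2%N * x.2)) * k * mu x.2 * x.1 +
    (1 - Num.min 1 (K 5%N * x.2)) * D * x.2.
  by rewrite /vsub /fK /fchem /= !sum5 /=; field; rewrite ?k1 ?k2 ?k3 ?k4 ?k5.
rewrite [vsub _ _]surjective_pairing e1 e2; apply: le_trans (vnorm_le _ _) _.
have [_ ->] := minf (hK 2%N isT) s0.
have [_ ->] := minf (hK 4%N isT) b0.
have [_ ->] := minf (hK 5%N isT) s0.
have p0 : forall a : R, 0 <= pospart a by move=> a; rewrite /pospart le_max lexx orbT.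
rewrite !ger0_norm ?addr_ge0 ?mulr_ge0 ?p0 ?(ltW hk) ?(ltW hD) //; lra.
Qed.
Lemma pos0 (K s : R) : 0 < s -> s^-1 <= K -> pospart (1 - K * s) = 0.
Proof.
move=> hs hK; rewrite /pospart max_r // subr_le0.
have -> : (1 : R) = s^-1 * s by rewrite mulVf // gt_eqF.
by rewrite ler_wpM2r // ltW.
Qed.

Lemma conv0 (k D sin : R) (K : nat -> R) (mu : R -> R) (x : R * R) :
  0 < k -> 0 < D -> 0 < sin ->
  (forall i : nat, (1 <= i <= 5)%N -> 0 < K i) ->
  (forall s : R, 0 <= s -> 0 <= mu s) -> mu 0 = 0 ->
  Rplus2 x ->
  (0 < x.1 -> x.1^-1 <= K 4%N) -> (0 < x.2 -> x.2^-1 <= K 2%N /\ x.2^-1 <= K 5%N) ->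
  vnorm (vsub (fK k D sin K mu x) (fchem k D sin mu x)) <= 0.
Proof.
move=> hk hD hsin hK hmunn hmu0 hx h1 h2.
have [_ [_ h]] := part3 k D sin K mu x hk hD hsin hK hmunn hx.
apply: le_trans h _; case: hx => b0 s0.
have t1 : pospart (1 - K 4%N * x.1) * D * x.1 = 0.
  move: b0; rewrite le_eqVlt => /orP[/eqP <-|bp]; first by rewrite mulr0.
  by rewrite pos0 ?mul0r // h1.
have [t2 t3] : pospart (1 - K 2%N * x.2) * k * mu x.2 * x.1 = 0 /\
    pospart (1 - K 5%N * x.2) * D * x.2 = 0.
  move: s0 h2; rewrite le_eqVlt => /orP[/eqP <-|sp] h2.
    by rewrite hmu0 !mulr0 mul0r.
  have [a c] := h2 sp.
  by rewrite !pos0 ?mul0r.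
by rewrite t1 t2 t3 !addr0.
Qed.

End S.

Theorem lemma1 (R : realType) (k D sin mumax : R) (K : nat -> R) (mu : R -> R)
  (hk : 0 < k) (hD : 0 < D) (hsin : 0 < sin)
  (hK : forall i : nat, (1 <= i <= 5)%N -> 0 < K i)
  (hmu0 : mu 0 = 0)
  (hmupos : forall s : R, 0 < s -> 0 < mu s)
  (hmunn : forall s : R, 0 <= s -> 0 <= mu s)
  (hmumax : forall s : R, 0 <= s -> mu s <= mumax)
  (hmucont : forall e : R, 0 < e ->
     exists2 d : R, 0 < d & forall s : R, 0 <= s < d -> `|mu s - mu 0| < e) :
  (* |nu_i(x)| <= |nu_i| *)
  (forall (i : nat) (x : R * R), (1 <= i <= 5)%N -> Rplus2 x ->
     vnorm (nuK K i x) <= vnorm (nu K i)) /\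
  (* outside R_K *)
  (forall x : R * R, Rplus2 x -> ~ RK K x ->
     (forall i : nat, (1 <= i <= 5)%N -> nuK K i x = nu K i) /\
     mK k D sin K mu x = mC k D sin K mu x /\
     fK k D sin K mu x = fchem k D sin mu x) /\
  (* error bounds on R_+^2 *)
  (forall x : R * R, Rplus2 x ->
     (forall i : nat, (1 <= i <= 5)%N ->
        vnorm (vsub (nuK K i x) (nu K i)) <= (Kmin K)^-1) /\
     vnorm (vsub (mK k D sin K mu x) (mC k D sin K mu x)) <= (Kmin K)^-1 /\
     vnorm (vsub (fK k D sin K mu x) (fchem k D sin mu x)) <=
       pospart (1 - K 2%N * x.2) * k * mu x.2 * x.1
       + pospart (1 - K 4%N * x.1) * D * x.1
       + pospart (1 - K 5%N * x.2) * D * x.2) /\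
  (* pointwise convergence f_K(x) -> f(x) as all K_i -> oo, on R_+^2 *)
  (forall x : R * R, Rplus2 x ->
     forall e : R, 0 < e -> exists M : R, forall K' : nat -> R,
       (forall i : nat, (1 <= i <= 5)%N -> 0 < K' i /\ M <= K' i) ->
       vnorm (vsub (fK k D sin K' mu x) (fchem k D sin mu x)) <= e) /\
  (* uniform convergence on compact subsets of (0,oo)^2 *)
  (forall A : set (R * R), compact A -> A `<=` [set x | 0 < x.1 /\ 0 < x.2] ->
     forall e : R, 0 < e -> exists M : R, forall K' : nat -> R,
       (forall i : nat, (1 <= i <= 5)%N -> 0 < K' i /\ M <= K' i) ->
       forall x : R * R, A x ->
         vnorm (vsub (fK k D sin K' mu x) (fchem k D sin mu x)) <= e).
Proof.
have pc1 : continuous (@fst R R) by move=> x; exact: cvg_fst.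
have pc2 : continuous (@snd R R) by move=> x; exact: cvg_snd.
split; first by move=> i x hi hx; exact: part1.
split; first by move=> x hx nR; exact: part2.
split; first by move=> x hx; exact: part3.
split.
  move=> x hx e he; exists (Num.max x.1^-1 x.2^-1) => K' HK'.
  have hK' : forall i, (1 <= i <= 5)%N -> 0 < K' i by move=> i hi; case: (HK' i hi).
  apply: le_trans (conv0 _ k D sin K' mu x hk hD hsin hK' hmunn hmu0 hx _ _) (ltW he).
    move=> _; have [_ m] := HK' 4%N isT; apply: le_trans _ m; by rewrite le_max lexx.
  move=> _; have [_ m2] := HK' 2%N isT; have [_ m5] := HK' 5%N isT.
  by split; [apply: le_trans _ m2|apply: le_trans _ m5]; rewrite le_max lexx orbT.
move=> A cA sub e he.
have [d1 [d1p H1]] := comp_lb1 _ _ _ pc1 cA (fun x Ax => (sub x Ax).1).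
have [d2 [d2p H2]] := comp_lb1 _ _ _ pc2 cA (fun x Ax => (sub x Ax).2).
exists (Num.max d1^-1 d2^-1) => K' HK' x Ax.
have hK' : forall i, (1 <= i <= 5)%N -> 0 < K' i by move=> i hi; case: (HK' i hi).
have [p1 p2] := sub x Ax.
have hx : Rplus2 x by split; apply: ltW.
have i1 : x.1^-1 <= d1^-1 by rewrite lef_pV2 ?posrE // H1.
have i2 : x.2^-1 <= d2^-1 by rewrite lef_pV2 ?posrE // H2.
apply: le_trans (conv0 _ k D sin K' mu x hk hD hsin hK' hmunn hmu0 hx _ _) (ltW he).
  move=> _; have [_ m] := HK' 4%N isT; apply: le_trans i1 (le_trans _ m); by rewrite le_max lexx.
move=> _; have [_ m2] := HK' 2%N isT; have [_ m5] := HK' 5%N isT.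
by split; [apply: le_trans i2 (le_trans _ m2)|apply: le_trans i2 (le_trans _ m5)]; rewrite le_max lexx orbT.
Qed.
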